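(* Assume the standing hypotheses (S) with $\lambda\ge0$ hold for two time steps $\tau,\eta>0$ (with initial data $X_0^\tau,X_0^\eta\in\mathbb H$ and corresponding scheme iterates). Then for every $t\ge0$, \[d^2_{\tau,\eta}(t;t)\le\|X_0^\tau-X_0^\eta\|^2_{\mathbb H}+\frac74\Big(\tau^2\|\nabla\phi^{\#}_{\rho_0}(X_0^\tau)\|^2_{\mathbb H}+\eta^2\|\nabla\phi^{\#}_{\rho_0}(X_0^\eta)\|^2_{\mathbb H}\Big).\]
   Context: Interpolations: for a time step $\tau$ and $t\in[n\tau,(n+1)\tau)$ set $\ell_\tau(t):=(t-n\tau)/\tau$, $\underline X_t^\tau:=X_n^\tau$, $\overline X_t^\tau:=X_{n+1}^\tau$; for $\xi\in\mathbb H$, $d^2_\tau(t;\xi):=(1-\ell_\tau(t))\|\xi-\underline X_t^\tau\|^2_{\mathbb H}+\ell_\tau(t)\|\xi-\overline X_t^\tau\|^2_{\mathbb H}$; and $d^2_{\tau,\eta}(t;t):=(1-\ell_\eta(t))\,d^2_\tau(t;\underline X_t^\eta)+\ell_\eta(t)\,d^2_\tau(t;\overline X_t^\eta)$. Standing hypotheses (S): $\rho_0\in\mathcal P_2(\mathbb R^d)$; $\mathbb H=L^2(\mathbb R^d;\rho_0)$ is the Hilbert space of $\rho_0$-square-integrable maps $\mathbb R^d\to\mathbb R^d$ with $\langle\xi_1,\xi_2\rangle_{\mathbb H}=\int\langle\xi_1,\xi_2\rangle d\rho_0$; $\phi:\mathcal P_2(\mathbb R^d)\to\mathbb R$ has lift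 $\phi^{\#}_{\rho_0}(\xi):=\phi(\xi_{\#}\rho_0)$ which is Fréchet differentiable on $\mathbb H$ (gradient $\nabla\phi^{\#}_{\rho_0}$), $\lambda$-convex on $\mathbb H$ for some $\lambda\in\mathbb R$ (i.e. $\phi^{\#}_{\rho_0}((1-t)\xi_1+t\xi_2)\le(1-t)\phi^{\#}_{\rho_0}(\xi_1)+t\phi^{\#}_{\rho_0}(\xi_2)-\frac\lambda2t(1-t)\|\xi_1-\xi_2\|_{\mathbb H}^2$), and $\inf_{\mathbb H}\phi^{\#}_{\rho_0}>-\infty$; the time step $\tau>0$ satisfies $\lambda/2+1/\tau>0$; $X_0^\tau\in\mathbb H$. Lagrangian trapezoidal scheme: $X_{n+1}^\tau$ is the (unique) minimizer over $\xi\in\mathbb H$ of $\tfrac12\phi^{\#}_{\rho_0}(\xi)+\tfrac12\langle\nabla\phi^{\#}_{\rho_0}(X_n^\tau),\xi\rangle_{\mathbb H}+\tfrac1{2\tau}\|\xi-X_n^\tau\|^2_{\mathbb H}$; equivalently $X_{n+1}^\tau=X_n^\tau-\frac\tau2\big(\nabla\phi^{\#}_{\rho_0}(X_{n+1}^\tau)+\nabla\phi^{\#}_{\rho_0}(X_n^\tau)\big)$. *)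

(* Defs.v *)
From HB Require Import structures.
From mathcomp Require Import all_boot all_order all_algebra.
From mathcomp Require Import all_classical all_reals.
From mathcomp Require Import topology normedtype derive.
Set Implicit Arguments. Unset Strict Implicit. Unset Printing Implicit Defensive.
Import Order.TTheory GRing.Theory Num.Theory.
Import numFieldNormedType.Exports.
Local Open Scope ring_scope.

(* The Hilbert space H is modelled as a complete normed space over a realType R
   together with an inner product ip inducing its norm. *)
Definition is_inner_product (R : realType) (H : normedModType R)
    (ip : H -> H -> R) : Prop :=
  [/\ forall x y, ip x y = ip y x,
      forall a x y z, ip (a *: x + y) z = a * ip x z + ip y z
    & forall x, `|x| ^+ 2 = ip x x].

Definition has_gradient (R : realType) (H : normedModType R)
    (ip : H -> H -> R) (psi : H -> R) (g : H -> H) : Prop :=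
  forall x, differentiable psi x /\ forall h, 'd psi x h = ip (g x) h.

Definition lambda_convex (R : realType) (H : normedModType R)
    (lam : R) (psi : H -> R) : Prop :=
  forall x1 x2 (s : R), 0 <= s <= 1 ->
    psi ((1 - s) *: x1 + s *: x2)
      <= (1 - s) * psi x1 + s * psi x2 - lam / 2 * s * (1 - s) * `|x1 - x2| ^+ 2.

Definition trap_functional (R : realType) (H : normedModType R)
    (ip : H -> H -> R) (psi : H -> R) (g : H -> H) (tau : R) (Xn xi : H) : R :=
  psi xi / 2 + ip (g Xn) xi / 2 + `|xi - Xn| ^+ 2 / (2 * tau).

Definition trap_scheme (R : realType) (H : normedModType R)
    (ip : H -> H -> R) (psi : H -> R) (g : H -> H) (tau : R) (X0 : H)
    (X : nat -> H) : Prop :=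
  X 0%N = X0 /\
  forall n, forall xi, trap_functional ip psi g tau (X n) (X n.+1)
                      <= trap_functional ip psi g tau (X n) xi.

Definition idx (R : realType) (tau t : R) : nat := Num.truncn (t / tau).
Definition ell (R : realType) (tau t : R) : R := (t - (idx tau t)%:R * tau) / tau.
Definition lowX (R : realType) (H : Type) (X : nat -> H) (tau t : R) : H :=
  X (idx tau t).
Definition upX (R : realType) (H : Type) (X : nat -> H) (tau t : R) : H :=
  X (idx tau t).+1.

Definition d2 (R : realType) (H : normedModType R) (X : nat -> H) (tau t : R)
    (xi : H) : R :=
  (1 - ell tau t) * `|xi - lowX X tau t| ^+ 2 + ell tau t * `|xi - upX X tau t| ^+ 2.

Definition d2two (R : realType) (H : normedModType R) (X Y : nat -> H)
    (tau eta t : R) : R :=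
  (1 - ell eta t) * d2 X tau t (lowX Y eta t) + ell eta t * d2 X tau t (upX Y eta t).

(* Main.v *)
Require Import Defs.
From HB Require Import structures.
From mathcomp Require Import all_boot all_order all_algebra.
From mathcomp Require Import all_classical all_reals.
From mathcomp Require Import topology normedtype derive.
From mathcomp Require Import ring lra.
Import Order.TTheory GRing.Theory Num.Theory.
Import numFieldNormedType.Exports.
Set Implicit Arguments. Unset Strict Implicit.
Local Open Scope classical_set_scope.
Local Open Scope ring_scope.

Section IP.
Context (R : realType) (H : normedModType R) (ip : H -> H -> R)
  (Hip : is_inner_product ip).

Lemma ipC x y : ip x y = ip y x. Proof. by case: Hip. Qed.
Lemma ipn x : `|x| ^+ 2 = ip x x. Proof. by case: Hip. Qed.
Lemma ip0l z : ip 0 z = 0.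
Proof. case: Hip => _ L _; have := L 1 0 0 z; rewrite scaler0 addr0 mul1r; lra. Qed.
Lemma ipDl x y z : ip (x + y) z = ip x z + ip y z.
Proof. case: Hip => _ L _; have := L 1 x y z; rewrite scale1r mul1r //. Qed.
Lemma ipZl a x z : ip (a *: x) z = a * ip x z.
Proof. case: Hip => _ L _; have := L a x 0 z; rewrite addr0 ip0l addr0 //. Qed.
Lemma ipNl x z : ip (- x) z = - ip x z.
Proof. by rewrite -scaleN1r ipZl mulN1r. Qed.
Lemma ipBl x y z : ip (x - y) z = ip x z - ip y z.
Proof. by rewrite ipDl ipNl. Qed.
Lemma ipDr x y z : ip z (x + y) = ip z x + ip z y.
Proof. by rewrite ipC ipDl !(ipC z). Qed.
Lemma ipZr a x z : ip z (a *: x) = a * ip z x.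
Proof. by rewrite ipC ipZl (ipC z). Qed.
Lemma ipNr x z : ip z (- x) = - ip z x.
Proof. by rewrite ipC ipNl (ipC z). Qed.
Lemma ipBr x y z : ip z (x - y) = ip z x - ip z y.
Proof. by rewrite ipDr ipNr. Qed.
Lemma ip_ge0 x : 0 <= ip x x. Proof. by rewrite -ipn sqr_ge0. Qed.
End IP.

Lemma dir_limit (R : realType) (H : normedModType R) (ip : H -> H -> R) psi g x h :
  has_gradient ip psi g ->
  (fun s : R => s^-1 * (psi (s *: h + x) - psi x)) @ 0^'+ --> ip (g x) h.
Proof.
move=> Hg; have [dx dg] := Hg x.
have dv := @diff_derivable _ _ _ psi x h dx.
rewrite -dg -deriveE //.
have FG : (0:R)^'+ `=>` (0:R)^'.
  move=> P [e e0 HP]; exists e => // y /= hy y0.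
  by apply: HP => //; rewrite gt_eqF.
set f := fun s : R => s^-1 *: ((psi \o shift x) (s *: h) - psi x).
change (f @ 0^'+ --> 'D_h psi x).
exact: cvg_trans (cvg_app f FG) dv.
Qed.

From mathcomp Require Import ring lra.

Lemma foc (R : realType) (H : normedModType R) (ip : H -> H -> R) psi g lam :
  has_gradient ip psi g -> lambda_convex lam psi -> 0 <= lam ->
  forall x y, psi x + ip (g x) (y - x) <= psi y.
Proof.
move=> Hg Hc l0 x y.
rewrite -lerBrDl.
apply: (cvgr_to_le (@dir_limit R H ip psi g x (y - x) Hg)).
near=> s.
have s0 : 0 < s by near: s; exact: nbhs_right_gt.
have s1 : s < 1 by near: s; exact: nbhs_right_lt.
have E : s *: (y - x) + x = (1 - s) *: x + s *: y.
  by rewrite scalerBr scalerBl scale1r addrC addrA [x + _]addrC -addrA addrC.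
rewrite E.
have := Hc x y s; rewrite (ltW s0) (ltW s1) => /(_ isT) Hs.
have c0 : 0 <= lam / 2 * s * (1 - s) * `|x - y| ^+ 2.
  apply: mulr_ge0; last exact: sqr_ge0.
  apply: mulr_ge0; last lra.
  apply: mulr_ge0 => //; lra.
rewrite mulrC ler_pdivrMr //.
nra.
Unshelve. all: by end_near.
Qed.

Lemma EL_ineq (R : realType) (H : normedModType R) (ip : H -> H -> R) psi g tau Xn Xm :
  is_inner_product ip -> has_gradient ip psi g -> 0 < tau ->
  (forall xi, trap_functional ip psi g tau Xn Xm <= trap_functional ip psi g tau Xn xi) ->
  forall h, 0 <= ip (g Xm) h + ip (g Xn) h + 2 / tau * ip (Xm - Xn) h.
Proof.
move=> Hip Hg t0 Hmin h.
set c := ip h h / tau.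
have L1 := @dir_limit R H ip psi g Xm h Hg.
have L2 : (fun s : R => s * c) @ 0^'+ --> 0.
  rewrite -[X in _ --> X](mul0r c); apply: cvgMr_tmp.
  by apply: cvg_at_right_filter; exact: cvg_id.
have L : ((fun s : R => s^-1 * (psi (s *: h + Xm) - psi Xm)) + (fun s : R => s * c)) @ 0^'+ --> ip (g Xm) h + 0.
  by apply: cvgD.
rewrite addr0 in L.
have ->: ip (g Xm) h + ip (g Xn) h + 2 / tau * ip (Xm - Xn) h =
   ip (g Xm) h - (- ip (g Xn) h - 2 / tau * ip (Xm - Xn) h) by lra.
rewrite subr_ge0.
apply: (cvgr_to_ge L).
near=> s.
have s0 : 0 < s by near: s; exact: nbhs_right_gt.
have := Hmin (s *: h + Xm).
rewrite /trap_functional /=.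
rewrite !(ipn Hip) !(ipDl Hip, ipDr Hip, ipZl Hip, ipZr Hip, ipNl Hip, ipNr Hip, ipBl Hip, ipBr Hip).
rewrite (ipC Hip Xm h) (ipC Hip Xn h) (ipC Hip Xn Xm).
move=> Hs.
have hw : 0 <= ip h h by exact: ip_ge0.
have Ts : tau^-1 * tau = 1 by rewrite mulVf ?gt_eqF.
have Ss : s^-1 * s = 1 by rewrite mulVf ?gt_eqF.
have T0 : 0 < tau^-1 by rewrite invr_gt0.
have S0 : 0 < s^-1 by rewrite invr_gt0.
rewrite /c.
set A := psi (s *: h + Xm); set B := psi Xm.
have HD : 0 <= (A - B) + s * ip (g Xn) h + s * s * ip h h * tau^-1
   + 2 * s * (ip h Xm - ip h Xn) * tau^-1.
  move: Hs; rewrite -/A -/B. lra.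
rewrite [X in _ <= X]/=.
have := mulr_ge0 (ltW S0) HD.
change (0 <= s^-1 * (A - B + s * ip (g Xn) h + s * s * ip h h / tau + 2 * s * (ip h Xm - ip h Xn) / tau) ->
  - ip (g Xn) h - 2 / tau * (ip h Xm - ip h Xn) <= s^-1 * (A - B) + s * (ip h h / tau)).
have tn : tau != 0 by rewrite gt_eqF.
have sn : s != 0 by rewrite gt_eqF.
have -> : s^-1 * (A - B + s * ip (g Xn) h + s * s * ip h h / tau + 2 * s * (ip h Xm - ip h Xn) / tau)
  = s^-1 * (A - B) + ip (g Xn) h + s * ip h h / tau + 2 * (ip h Xm - ip h Xn) / tau.
  by field; rewrite tn sn.
lra.
Unshelve. all: by end_near.
Qed.

Lemma EL_eq (R : realType) (H : normedModType R) (ip : H -> H -> R) psi g tau Xn Xm :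
  is_inner_product ip -> has_gradient ip psi g -> 0 < tau ->
  (forall xi, trap_functional ip psi g tau Xn Xm <= trap_functional ip psi g tau Xn xi) ->
  Xm - Xn = - (tau / 2) *: (g Xn + g Xm).
Proof.
move=> Hip Hg t0 Hmin.
have Hin := EL_ineq Hip Hg t0 Hmin.
set v := g Xm + g Xn + (2 / tau) *: (Xm - Xn).
have Hv : forall h, 0 <= ip v h.
  by move=> h; rewrite /v (ipDl Hip) (ipDl Hip) (ipZl Hip); exact: Hin.
have v0 : v = 0.
  have := Hv (- v); rewrite (ipNr Hip) => h1.
  have h2 := ip_ge0 Hip v.
  have : `|v| ^+ 2 = 0 by rewrite (ipn Hip); lra.
  by move/eqP; rewrite sqrf_eq0 normr_eq0 => /eqP.
have E : (2 / tau) *: (Xm - Xn) = - (g Xm + g Xn).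
  by apply/eqP; rewrite -addr_eq0 addrC; apply/eqP.
have tn : tau != 0 by rewrite gt_eqF.
have -> : Xm - Xn = (tau / 2) *: ((2 / tau) *: (Xm - Xn)).
  by rewrite scalerA (_ : tau / 2 * (2 / tau) = 1) ?scale1r //; field.
by rewrite E scalerN scaleNr addrC.
Qed.

Section Seq.
Context (R : realType) (H : normedModType R) (ip : H -> H -> R) (psi : H -> R)
  (g : H -> H) (lam tau : R) (X0 : H) (X : nat -> H).
Hypotheses (Hip : is_inner_product ip) (Hg : has_gradient ip psi g)
  (Hc : lambda_convex lam psi) (l0 : 0 <= lam) (t0 : 0 < tau)
  (HX : trap_scheme ip psi g tau X0 X).

Let focX x y : psi x + ip (g x) (y - x) <= psi y.
Proof. exact: (@foc R H ip psi g lam Hg Hc l0). Qed.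

Lemma seq_EL k : X k.+1 = X k + - (tau / 2) *: (g (X k) + g (X k.+1)).
Proof.
case: HX => _ Hm.
by rewrite -(EL_eq Hip Hg t0 (Hm k)) addrC subrK.
Qed.

Lemma seq_D k : X k.+1 - X k = - (tau / 2) *: (g (X k) + g (X k.+1)).
Proof. by rewrite {1}seq_EL addrC addKr. Qed.

Lemma seq_D' k : X k - X k.+1 = (tau / 2) *: (g (X k) + g (X k.+1)).
Proof. by rewrite -opprB seq_D scaleNr opprK. Qed.

Lemma seq_mono k : `|g (X k.+1)| ^+ 2 <= `|g (X k)| ^+ 2.
Proof.
have h1 := focX (X k) (X k.+1).
have h2 := focX (X k.+1) (X k).
move: h1 h2; rewrite !(ipn Hip) seq_D seq_D'.
set u := g (X k); set w := g (X k.+1).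
rewrite !(ipDl Hip, ipDr Hip, ipZl Hip, ipZr Hip) (ipC Hip w u).
move=> h1 h2.
have h3 : tau * (ip w w - ip u u) <= 0 by lra.
by move: h3; rewrite pmulr_rle0 // subr_le0.
Qed.

Lemma seq_mono0 k : `|g (X k)| ^+ 2 <= `|g (X 0)| ^+ 2.
Proof. elim: k => [//|k IH]; exact: le_trans (seq_mono k) IH. Qed.

Lemma seq_c k : psi (X k) - psi (X k.+1) <= tau * `|g (X k)| ^+ 2.
Proof.
have h1 := focX (X k) (X k.+1).
have h2 := seq_mono k.
have h3 := ip_ge0 Hip (g (X k) - g (X k.+1)).
move: h1 h2 h3; rewrite !(ipn Hip) seq_D.
set u := g (X k); set w := g (X k.+1).
rewrite !(ipDl Hip, ipDr Hip, ipZl Hip, ipZr Hip, ipNl Hip, ipNr Hip) (ipC Hip w u).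
move=> h1 h2 h3.
have h4 : ip u w <= ip u u by lra.
have h5 : tau * ip u w <= tau * ip u u by rewrite ler_pM2l.
lra.
Qed.

Lemma seq_EVI k xi :
  `|xi - X k.+1| ^+ 2 - `|xi - X k| ^+ 2 <=
  2 * tau * (psi xi - (psi (X k) + psi (X k.+1)) / 2)
  + tau ^+ 2 / 4 * (`|g (X k)| ^+ 2 - `|g (X k.+1)| ^+ 2).
Proof.
have h1 := focX (X k.+1) xi.
have h2 := focX (X k) xi.
have E : xi - X k.+1 = (xi - X k) - (X k.+1 - X k).
  by rewrite opprB addrA subrK.
move: h1 h2; rewrite !(ipn Hip) E seq_D.
move: (xi - X k) => b.
set u := g (X k); set w := g (X k.+1).
rewrite !(ipDl Hip, ipDr Hip, ipZl Hip, ipZr Hip, ipNl Hip, ipNr Hip).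
rewrite (ipC Hip w u) (ipC Hip u b) (ipC Hip w b).
move=> h1 h2.
have h1' := ler_wpM2l (ltW t0) h1.
have h2' := ler_wpM2l (ltW t0) h2.
move: h1' h2'; rewrite !mulrDr.
move=> h1' h2'.
lra.
Qed.
End Seq.
Definition Qf (R : realFieldType) (tau eta d00 d01 d10 d11 pX0 pX1 pY0 pY1 rX rY l k : R) :=
  (1 - k) * ((1 - l) * d00 + l * d10) + k * ((1 - l) * d01 + l * d11)
  - (l * rX + tau * (l * (1 - l)) * (pX0 - pX1))
  - (k * rY + eta * (k * (1 - k)) * (pY0 - pY1)).

Lemma piece (R : realFieldType) (tau eta d00 d01 d10 d11 pX0 pX1 pY0 pY1 rX rY l1 l2 k1 k2 : R) :
  0 <= l1 -> l1 <= l2 -> l2 <= 1 -> 0 <= k1 -> k1 <= k2 -> k2 <= 1 ->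
  (l2 - l1) * tau = (k2 - k1) * eta ->
  d10 - d00 <= 2 * tau * (pY0 - (pX0 + pX1) / 2) + rX ->
  d11 - d01 <= 2 * tau * (pY1 - (pX0 + pX1) / 2) + rX ->
  d01 - d00 <= 2 * eta * (pX0 - (pY0 + pY1) / 2) + rY ->
  d11 - d10 <= 2 * eta * (pX1 - (pY0 + pY1) / 2) + rY ->
  Qf tau eta d00 d01 d10 d11 pX0 pX1 pY0 pY1 rX rY l2 k2
  <= Qf tau eta d00 d01 d10 d11 pX0 pX1 pY0 pY1 rX rY l1 k1.
Proof.
move=> hl1 hl12 hl2 hk1 hk12 hk2 Hab h1 h2 h3 h4.
rewrite /Qf.
set a := l2 - l1; set b := k2 - k1.
set lm := (l1 + l2) / 2; set km := (k1 + k2) / 2.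
have a0 : 0 <= a by rewrite /a subr_ge0.
have b0 : 0 <= b by rewrite /b subr_ge0.
have w1 : 0 <= a * (1 - km) by apply: mulr_ge0 => //; rewrite /km; lra.
have w2 : 0 <= a * km by apply: mulr_ge0 => //; rewrite /km; lra.
have w3 : 0 <= b * (1 - lm) by apply: mulr_ge0 => //; rewrite /lm; lra.
have w4 : 0 <= b * lm by apply: mulr_ge0 => //; rewrite /lm; lra.
have H1 := ler_wpM2l w1 h1.
have H2 := ler_wpM2l w2 h2.
have H3 := ler_wpM2l w3 h3.
have H4 := ler_wpM2l w4 h4.
set U := 2 * ((1 - km) * pY0 + km * pY1 - (pX0 + pX1) / 2) - (1 - 2 * lm) * (pX0 - pX1).
have Z : (a * tau - b * eta) * U = 0 by rewrite Hab subrr mul0r.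
move: H1 H2 H3 H4 Z; rewrite /U /a /b /lm /km => H1 H2 H3 H4 Z.
lra.
Qed.

Lemma induct (R : realFieldType) (Q : nat -> R -> nat -> R -> R) (tau eta : R) :
  0 < tau -> 0 < eta ->
  (forall n m l1 l2 k1 k2, 0 <= l1 -> l1 <= l2 -> l2 <= 1 -> 0 <= k1 -> k1 <= k2 -> k2 <= 1 ->
     (l2 - l1) * tau = (k2 - k1) * eta -> Q n l2 m k2 <= Q n l1 m k1) ->
  (forall n m k, Q n.+1 0 m k = Q n 1 m k) ->
  (forall n m l, Q n l m.+1 0 = Q n l m 1) ->
  forall N n m l k, (n + m <= N)%N -> 0 <= l -> l <= 1 -> 0 <= k -> k <= 1 ->
    (n%:R + l) * tau = (m%:R + k) * eta -> Q n l m k <= Q 0%N 0 0%N 0.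
Proof.
move=> t0 e0 Hp HX HY N.
have tn : tau != 0 by rewrite gt_eqF.
have en : eta != 0 by rewrite gt_eqF.
elim: N => [|N IH] n m l k Hnm l0 l1 k0 k1 Ht.
  move: Hnm Ht; rewrite leqn0 addn_eq0 => /andP[/eqP -> /eqP ->].
  rewrite ?mulr0n ?add0r => Ht.
  apply: Hp => //; by rewrite !subr0.
have n0 : 0 <= n%:R :> R by rewrite ler0n.
have m0 : 0 <= m%:R :> R by rewrite ler0n.
case: (lerP (m%:R * eta) (n%:R * tau)) => Hc.
- set k' := (n%:R * tau - m%:R * eta) / eta.
  have k'0 : 0 <= k' by rewrite /k' divr_ge0 ?subr_ge0 // ltW.
  have Ek : k' * eta = n%:R * tau - m%:R * eta by rewrite /k' divfK.
  clearbody k'.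
  have k'k : k' <= k.
    rewrite -(ler_pM2r e0) Ek; nra.
  apply: le_trans (Hp n m 0 l k' k _ _ _ _ _ _ _) _ => //.
    rewrite subr0 mulrBl Ek; lra.
  case: n Hnm Hc Ht n0 k'0 Ek k'k => [|n'] Hnm Hc Ht n0 k'0 Ek k'k.
    have z0 : (0%N)%:R = 0 :> R by [].
    have mz : m%:R * eta = 0.
      move: Hc; rewrite z0 mul0r => Hc.
      by apply/le_anti; rewrite Hc mulr_ge0 // ltW.
    have m00 : m = 0%N.
      move: mz => /eqP; rewrite mulf_eq0 (negbTE en) orbF pnatr_eq0.
      by move/eqP.
    have kz : k' = 0.
      move: Ek; rewrite m00 z0 !mul0r subrr => /eqP; rewrite mulf_eq0 (negbTE en) orbF.
      by move/eqP.
    by rewrite kz m00 lexx.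
  rewrite HX.
  have Hn : (n' + m <= N)%N by move: Hnm; rewrite addSn ltnS.
  have Hk1 : k' <= 1 by apply: le_trans k'k k1.
  have Ht' : (n'%:R + 1) * tau = (m%:R + k') * eta.
    by move: Ek; rewrite -natr1; lra.
  exact: (IH n' m 1 k' Hn ler01 (lexx 1) k'0 Hk1 Ht').
- set l' := (m%:R * eta - n%:R * tau) / tau.
  have l'0 : 0 <= l' by rewrite /l' divr_ge0 ?subr_ge0 // ltW.
  have El : l' * tau = m%:R * eta - n%:R * tau by rewrite /l' divfK.
  clearbody l'.
  have l'l : l' <= l.
    rewrite -(ler_pM2r t0) El; nra.
  apply: le_trans (Hp n m l' l 0 k _ _ _ _ _ _ _) _ => //.
    rewrite subr0 mulrBl El; lra.
  case: m Hnm Hc Ht m0 l'0 El l'l => [|m'] Hnm Hc Ht m0 l'0 El l'l.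
    have z0 : (0%N)%:R = 0 :> R by [].
    by exfalso; move: Hc; rewrite z0 mul0r; apply/negP; rewrite -leNgt mulr_ge0 // ltW.
  rewrite HY.
  have Hn : (n + m' <= N)%N by move: Hnm; rewrite addnS ltnS.
  have Hl1 : l' <= 1 by apply: le_trans l'l l1.
  have Ht' : (n%:R + l') * tau = (m'%:R + 1) * eta.
    by move: El; rewrite -natr1; lra.
  exact: (IH n m' l' 1 Hn l'0 Hl1 ler01 (lexx 1) Ht').
Qed.

Definition Dq (R : realType) (H : normedModType R) (X Y : nat -> H) n (l : R) m (k : R) : R :=
  (1 - k) * ((1 - l) * `|Y m - X n| ^+ 2 + l * `|Y m - X n.+1| ^+ 2)
  + k * ((1 - l) * `|Y m.+1 - X n| ^+ 2 + l * `|Y m.+1 - X n.+1| ^+ 2).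

Definition Pq (R : realType) (H : normedModType R) (psi : H -> R) (g : H -> H)
    (X : nat -> H) (tau : R) n (l : R) : R :=
  tau ^+ 2 / 4 * (`|g (X 0%N)| ^+ 2 - `|g (X n)| ^+ 2)
  + (l * (tau ^+ 2 / 4 * (`|g (X n)| ^+ 2 - `|g (X n.+1)| ^+ 2))
     + tau * (l * (1 - l)) * (psi (X n) - psi (X n.+1))).

Definition Qq (R : realType) (H : normedModType R) (psi : H -> R) (g : H -> H)
    (X Y : nat -> H) (tau eta : R) n l m k : R :=
  Dq X Y n l m k - Pq psi g X tau n l - Pq psi g Y eta m k.

Lemma Qq_Qf (R : realType) (H : normedModType R) (psi : H -> R) (g : H -> H)
    (X Y : nat -> H) (tau eta : R) n l m k :
  Qq psi g X Y tau eta n l m k =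
  Qf tau eta (`|Y m - X n| ^+ 2) (`|Y m.+1 - X n| ^+ 2) (`|Y m - X n.+1| ^+ 2)
     (`|Y m.+1 - X n.+1| ^+ 2) (psi (X n)) (psi (X n.+1)) (psi (Y m)) (psi (Y m.+1))
     (tau ^+ 2 / 4 * (`|g (X n)| ^+ 2 - `|g (X n.+1)| ^+ 2))
     (eta ^+ 2 / 4 * (`|g (Y m)| ^+ 2 - `|g (Y m.+1)| ^+ 2)) l k
  - tau ^+ 2 / 4 * (`|g (X 0%N)| ^+ 2 - `|g (X n)| ^+ 2)
  - eta ^+ 2 / 4 * (`|g (Y 0%N)| ^+ 2 - `|g (Y m)| ^+ 2).
Proof. rewrite /Qq /Dq /Pq /Qf; ring. Qed.

Lemma Qq_piece (R : realType) (H : normedModType R) (ip : H -> H -> R) (psi : H -> R)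
    (g : H -> H) (lam tau eta : R) (X0 Y0 : H) (X Y : nat -> H) :
  is_inner_product ip -> has_gradient ip psi g -> lambda_convex lam psi -> 0 <= lam ->
  0 < tau -> 0 < eta -> trap_scheme ip psi g tau X0 X -> trap_scheme ip psi g eta Y0 Y ->
  forall n m l1 l2 k1 k2, 0 <= l1 -> l1 <= l2 -> l2 <= 1 -> 0 <= k1 -> k1 <= k2 -> k2 <= 1 ->
     (l2 - l1) * tau = (k2 - k1) * eta ->
     Qq psi g X Y tau eta n l2 m k2 <= Qq psi g X Y tau eta n l1 m k1.
Proof.
move=> Hip Hg Hc l0 t0 e0 HX HY n m l1 l2 k1 k2 ? ? ? ? ? ? Hab.
rewrite !Qq_Qf !lerD2r.
apply: piece => //.
- exact: (seq_EVI Hip Hg Hc l0 t0 HX).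
- exact: (seq_EVI Hip Hg Hc l0 t0 HX).
- rewrite (distrC (Y m.+1)) (distrC (Y m)); exact: (seq_EVI Hip Hg Hc l0 e0 HY).
- rewrite (distrC (Y m.+1)) (distrC (Y m)); exact: (seq_EVI Hip Hg Hc l0 e0 HY).
Qed.

Lemma Pq_bound (R : realType) (H : normedModType R) (ip : H -> H -> R) (psi : H -> R)
    (g : H -> H) (lam tau : R) (X0 : H) (X : nat -> H) :
  is_inner_product ip -> has_gradient ip psi g -> lambda_convex lam psi -> 0 <= lam ->
  0 < tau -> trap_scheme ip psi g tau X0 X ->
  forall n l, 0 <= l -> l <= 1 -> Pq psi g X tau n l <= tau ^+ 2 / 2 * `|g (X 0%N)| ^+ 2.
Proof.
move=> Hip Hg Hc l0 t0 HX n l la lb.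
have h1 := seq_mono0 Hip Hg Hc l0 t0 HX n.
have h2 := seq_mono Hip Hg Hc l0 t0 HX n.
have h3 := seq_c Hip Hg Hc l0 t0 HX n.
have h4 : 0 <= `|g (X n.+1)| ^+ 2 by exact: sqr_ge0.
rewrite /Pq.
set G0 := `|g (X 0%N)| ^+ 2; set Gn := `|g (X n)| ^+ 2; set Gn1 := `|g (X n.+1)| ^+ 2.
set c := psi (X n) - psi (X n.+1).
set w := l * (1 - l).
have w0 : 0 <= w by rewrite /w mulr_ge0 // subr_ge0.
have w1 : w <= 1 / 4 by have := sqr_ge0 (l - 1 / 2); rewrite /w expr2; lra.
have t2 : 0 <= tau ^+ 2 by exact: sqr_ge0.
have p1 : 0 <= tau * w * (tau * Gn - c) by rewrite mulr_ge0 ?mulr_ge0 ?subr_ge0 // ltW.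
have p2 : 0 <= tau ^+ 2 * Gn * (1 / 4 - w) by rewrite mulr_ge0 ?mulr_ge0 ?subr_ge0 //; lra.
have p3 : 0 <= tau ^+ 2 * l * Gn1 by rewrite !mulr_ge0 // ltW.

have p4 : 0 <= tau ^+ 2 * (1 - l) * Gn by rewrite !mulr_ge0 ?subr_ge0 //; lra.
have p5 : 0 <= tau ^+ 2 * (G0 - Gn) by rewrite mulr_ge0 ?subr_ge0.
rewrite expr2 in t2 p2 p3 p4 p5 *.
lra.
Qed.

Lemma idx_ell (R : realType) (tau t : R) : 0 < tau -> 0 <= t ->
  [/\ 0 <= ell tau t, ell tau t <= 1 & ((idx tau t)%:R + ell tau t) * tau = t].
Proof.
move=> t0 tt.
have tn : tau != 0 by rewrite gt_eqF.
have q0 : 0 <= t / tau by rewrite divr_ge0 // ltW.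
have /andP[a b] := truncn_itv q0.
rewrite /ell /idx.
move: a b; set n := Num.truncn (t / tau) => a b.
have a' : n%:R * tau <= t by rewrite -ler_pdivlMr.
have b' : t < n.+1%:R * tau by rewrite -ltr_pdivrMr.
move: b'; rewrite -natr1 => b'.
split.
- by rewrite divr_ge0 ?subr_ge0 // ltW.
- by rewrite ler_pdivrMr //; lra.
- by field.
Qed.

Unset Implicit Arguments.

Theorem mainTheorem12 (R : realType) (H : completeNormedModType R)
    (ip : H -> H -> R) (psi : H -> R) (g : H -> H) (lam tau eta : R)
    (X0tau X0eta : H) (X Y : nat -> H) :
  is_inner_product ip ->
  has_gradient ip psi g ->
  lambda_convex lam psi ->
  (exists m : R, forall xi, m <= psi xi) ->
  0 <= lam ->
  0 < tau -> 0 < eta ->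
  0 < lam / 2 + 1 / tau -> 0 < lam / 2 + 1 / eta ->
  trap_scheme ip psi g tau X0tau X ->
  trap_scheme ip psi g eta X0eta Y ->
  forall t : R, 0 <= t ->
    d2two X Y tau eta t
      <= `|X0tau - X0eta| ^+ 2
         + 7 / 4 * (tau ^+ 2 * `|g X0tau| ^+ 2 + eta ^+ 2 * `|g X0eta| ^+ 2).
Proof.
move=> Hip Hg Hc _ l0 t0 e0 _ _ HX HY t tt.
have [a1 b1 c1] := idx_ell t0 tt.
have [a2 b2 c2] := idx_ell e0 tt.
have -> : d2two X Y tau eta t = Dq X Y (idx tau t) (ell tau t) (idx eta t) (ell eta t) by [].
set n := idx tau t; set l := ell tau t; set m := idx eta t; set k := ell eta t.
have cX : forall n m k, Qq psi g X Y tau eta n.+1 0 m k = Qq psi g X Y tau eta n 1 m k.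
  by move=> *; rewrite /Qq /Dq /Pq; ring.
have cY : forall n m l, Qq psi g X Y tau eta n l m.+1 0 = Qq psi g X Y tau eta n l m 1.
  by move=> *; rewrite /Qq /Dq /Pq; ring.
have E : (n%:R + l) * tau = (m%:R + k) * eta by rewrite c1 c2.
have Hle := induct t0 e0 (Qq_piece Hip Hg Hc l0 t0 e0 HX HY) cX cY (leqnn (n + m)) a1 b1 a2 b2 E.
have PX := Pq_bound Hip Hg Hc l0 t0 HX n a1 b1.
have PY := Pq_bound Hip Hg Hc l0 e0 HY m a2 b2.
have Q0 : Qq psi g X Y tau eta 0%N 0 0%N 0 = `|X0tau - X0eta| ^+ 2.
  rewrite /Qq /Dq /Pq; case: HX => -> _; case: HY => -> _.
  rewrite distrC; ring.
rewrite Q0 in Hle.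
move: Hle PX PY; rewrite /Qq.
case: HX => -> _; case: HY => -> _.
have g1 : 0 <= tau ^+ 2 * `|g X0tau| ^+ 2 by rewrite mulr_ge0 // sqr_ge0.
have g2 : 0 <= eta ^+ 2 * `|g X0eta| ^+ 2 by rewrite mulr_ge0 // sqr_ge0.
lra.
Qed.
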